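(* Let $(\mathfrak{g},[\cdot,\cdot]_{\mathfrak{g}})$ be a Leibniz algebra, $(V;\rho^L,\rho^R)$ a representation, $T$ a relative Rota-Baxter operator, and $x\in\mathfrak{g}$ a Nijenhuis element associated to $T$. Then $\rho^L(x)$ is a Nijenhuis operator on the Leibniz algebra $(V,[\cdot,\cdot]_T)$, where $[u,v]_T=\rho^L(Tu)v+\rho^R(Tv)u$.
   Context: A Leibniz algebra is a vector space $\mathfrak{g}$ with bilinear $[\cdot,\cdot]_{\mathfrak{g}}$ satisfying $[x,[y,z]_{\mathfrak{g}}]_{\mathfrak{g}}=[[x,y]_{\mathfrak{g}},z]_{\mathfrak{g}}+[y,[x,z]_{\mathfrak{g}}]_{\mathfrak{g}}$. A representation $(V;\rho^L,\rho^R)$: linear $\rho^L,\rho^R:\mathfrak{g}\to\mathfrak{gl}(V)$ with $\rho^L([x,y]_{\mathfrak{g}})=[\rho^L(x),\rho^L(y)]$, $\rho^R([x,y]_{\mathfrak{g}})=[\rho^L(x),\rho^R(y)]$, $\rho^R(y)\rho^L(x)=-\rho^R(y)\rho^R(x)$. A relative Rota-Baxter operator is a linear $T:V\to\mathfrak{g}$ with $[Tv_1,Tv_2]_{\mathfrak{g}}=T(\rho^L(Tv_1)v_2+\rho^R(Tv_2)v_1)$; $(V,[\cdot,\cdot]_T)$ is then a Leibniz algebra. An element $x\in\mathfrak{g}$ is a Nijenhuis element associated to $T$ if for all $y,z\in\mathfrak{g}$, $u\in V$: $[[x,y]_{\mathfrak{g}},[x,z]_{\mathfrak{g}}]_{\mathfrak{g}}=0$,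 $\rho^L([x,y]_{\mathfrak{g}})\rho^L(x)=0$, $\rho^R([x,y]_{\mathfrak{g}})\rho^L(x)=0$, and $[x,T\rho^L(x)u-[x,Tu]_{\mathfrak{g}}]_{\mathfrak{g}}=0$. A Nijenhuis operator on a Leibniz algebra $(A,[\cdot,\cdot])$ is a linear $N:A\to A$ with $[Na,Nb]=N([Na,b]+[a,Nb]-N[a,b])$ for all $a,b\in A$. *)

(* Defs.v *)
From mathcomp Require Import all_boot all_algebra.
Set Implicit Arguments. Unset Strict Implicit. Unset Printing Implicit Defensive.
Import GRing.Theory.
Local Open Scope ring_scope.

Definition is_linear (K : fieldType) (U W : lmodType K) (f : U -> W) : Prop :=
  forall (a : K) (u v : U), f (a *: u + v) = a *: f u + f v.

Definition is_bilinear (K : fieldType) (U1 U2 W : lmodType K)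
  (b : U1 -> U2 -> W) : Prop :=
  (forall y, is_linear (fun x => b x y)) /\ (forall x, is_linear (b x)).

Definition leibniz_identity (K : fieldType) (g : lmodType K)
  (br : g -> g -> g) : Prop :=
  forall x y z, br x (br y z) = br (br x y) z + br y (br x z).

Definition leibniz_algebra (K : fieldType) (g : lmodType K)
  (br : g -> g -> g) : Prop :=
  is_bilinear br /\ leibniz_identity br.

Definition leibniz_rep (K : fieldType) (g V : lmodType K)
  (br : g -> g -> g) (rhoL rhoR : g -> V -> V) : Prop :=
  [/\ is_bilinear rhoL, is_bilinear rhoR,
      (forall x y v, rhoL (br x y) v = rhoL x (rhoL y v) - rhoL y (rhoL x v)),
      (forall x y v, rhoR (br x y) v = rhoL x (rhoR y v) - rhoR y (rhoL x v)) &
      (forall x y v, rhoR y (rhoL x v) = - rhoR y (rhoR x v))].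

Definition relative_RB (K : fieldType) (g V : lmodType K)
  (br : g -> g -> g) (rhoL rhoR : g -> V -> V) (T : V -> g) : Prop :=
  is_linear T /\
  forall v1 v2, br (T v1) (T v2) = T (rhoL (T v1) v2 + rhoR (T v2) v1).

Definition bracketT (K : fieldType) (g V : lmodType K)
  (rhoL rhoR : g -> V -> V) (T : V -> g) : V -> V -> V :=
  fun u v => rhoL (T u) v + rhoR (T v) u.

Definition nijenhuis_element (K : fieldType) (g V : lmodType K)
  (br : g -> g -> g) (rhoL rhoR : g -> V -> V) (T : V -> g) (x : g) : Prop :=
  [/\ (forall y z, br (br x y) (br x z) = 0),
      (forall y v, rhoL (br x y) (rhoL x v) = 0),
      (forall y v, rhoR (br x y) (rhoL x v) = 0) &
      (forall u, br x (T (rhoL x u) - br x (T u)) = 0)].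

Definition nijenhuis_operator (K : fieldType) (A : lmodType K)
  (br : A -> A -> A) (N : A -> A) : Prop :=
  is_linear N /\
  forall a b, br (N a) (N b) = N (br (N a) b + br a (N b) - N (br a b)).

(* Main.v *)
Require Import Defs.
From mathcomp Require Import all_boot all_algebra.
Import GRing.Theory.
Local Open Scope ring_scope.

Lemma lin_add (K : fieldType) (U W : lmodType K) (f : U -> W) :
  is_linear f -> forall u v, f (u + v) = f u + f v.
Proof. by move=> H u v; rewrite -{1}(scale1r u) H scale1r. Qed.

Lemma lin_sub (K : fieldType) (U W : lmodType K) (f : U -> W) :
  is_linear f -> forall u v, f (u - v) = f u - f v.
Proof.
move=> H u v; rewrite addrC -scaleN1r H scaleN1r addrC //.
Qed.

Lemma lin_opp (K : fieldType) (U W : lmodType K) (f : U -> W) :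
  is_linear f -> forall u, f (- u) = - f u.
Proof.
move=> H u; have h0 : f 0 = 0 by rewrite -(subrr u) (@lin_sub _ _ _ _ H) subrr.
by rewrite -sub0r (@lin_sub _ _ _ _ H) h0 sub0r.
Qed.

Lemma t6 (M : zmodType) (a b c d e f : M) :
  a - b + c + d - e + f = a + f + c + d + (- b - e).
Proof.
rewrite -!addrA; congr (_ + _).
by rewrite !addrA [LHS](AC (5) ((((5*2)*3)*1)*4)).
Qed.

Lemma aux (M : zmodType) (a b c d : M) : c - d = b - a -> a = b - c + d.
Proof.
move=> h; have -> : b - c + d = b - (c - d) by rewrite opprB addrA addrAC.
by rewrite h opprB addrC subrK.
Qed.

Theorem proposition3p11 (K : fieldType) (g V : lmodType K)
  (br : g -> g -> g) (rhoL rhoR : g -> V -> V) (T : V -> g) (x : g) :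
  leibniz_algebra br ->
  leibniz_rep br rhoL rhoR ->
  relative_RB br rhoL rhoR T ->
  nijenhuis_element br rhoL rhoR T x ->
  nijenhuis_operator (bracketT rhoL rhoR T) (rhoL x).
Proof.
move=> [[_ Hbr2] _] [[HL1 HL2] _ HLc HRc _] _ [_ N2 N3 N4].
have Lx := HL2 x.
split=> // u v.
have E : forall w, br x (T (rhoL x w)) = br x (br x (T w)).
  by move=> w; apply/eqP; rewrite -subr_eq0 -lin_sub // N4.
rewrite /bracketT.
have A1 : rhoL (T (rhoL x u)) (rhoL x v) =
   rhoL x (rhoL (T (rhoL x u)) v) - rhoL x (rhoL x (rhoL (T u) v))
   + rhoL x (rhoL (T u) (rhoL x v)).
  have h := HLc x (T (rhoL x u)) v.
  rewrite E HLc N2 subr0 HLc in h.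
  rewrite (@lin_sub _ _ _ _ Lx) in h; exact: aux.
have A2 : rhoR (T (rhoL x v)) (rhoL x u) =
   rhoL x (rhoR (T (rhoL x v)) u) - rhoL x (rhoL x (rhoR (T v) u))
   + rhoL x (rhoR (T v) (rhoL x u)).
  have h := HRc x (T (rhoL x v)) u.
  rewrite E HRc N3 subr0 HRc in h.
  rewrite (@lin_sub _ _ _ _ Lx) in h; exact: aux.
rewrite A1 A2.
rewrite !(@lin_add _ _ _ _ Lx, @lin_sub _ _ _ _ Lx).
rewrite (@lin_opp _ _ _ _ Lx) (@lin_add _ _ _ _ Lx) opprD !addrA.
by rewrite [LHS](AC (6) (((((1*6)*3)*4)*2)*5)).
Qed.
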